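(* Fix $\lambda_1,\lambda_2,\lambda_3\in\mathbb{Z}_{\ge0}$ and a $0$-initial triple $(a,b,c)\in\mathbb{R}_+^3$. Let $\mathbf{w}=[w_1,w_2,\dots]$ be an infinite reduced sequence; for $n\ge1$ let $(a_n,b_n,c_n)=\mu_{w_n}\circ\cdots\circ\mu_{w_1}(1,1,1)$ (generalized Markov chain) and $(x_n,y_n,z_n)=\mathcal{M}_{w_n}\circ\cdots\circ\mathcal{M}_{w_1}(a,b,c)$ (classical Euclid chain). (1) If each of $1,2,3$ appears infinitely many times in $\mathbf{w}$, there exists a real number $q$ with $\lim_{n\to\infty}\frac{\log a_n}{x_n}=\lim_{n\to\infty}\frac{\log b_n}{y_n}=\lim_{n\to\infty}\frac{\log c_n}{z_n}=q$. (2) If some index $i\in\{1,2,3\}$ appears only finitely many times in $\mathbf{w}$, there exists a real number $q$ such that for both $j\in\{1,2,3\}\setminus\{i\}$, the logarithm of the $j$-th component of $(a_n,b_n,c_n)$ divided by the $j$-th component of $(x_n,y_n,z_n)$ converges to $q$ as $n\to\infty$.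
   Context: Generalized Markov mutations: $\mu_1(x_1,x_2,x_3)=(\frac{x_2^2+\lambda_1x_2x_3+x_3^2}{x_1},x_2,x_3)$, $\mu_2(x_1,x_2,x_3)=(x_1,\frac{x_1^2+\lambda_2x_1x_3+x_3^2}{x_2},x_3)$, $\mu_3(x_1,x_2,x_3)=(x_1,x_2,\frac{x_1^2+\lambda_3x_1x_2+x_2^2}{x_3})$ (these generate all positive integer solutions of $X_1^2+X_2^2+X_3^2+\lambda_3X_1X_2+\lambda_1X_2X_3+\lambda_2X_3X_1=(3+\lambda_1+\lambda_2+\lambda_3)X_1X_2X_3$ from $(1,1,1)$). Classical Euclid mutations on $\mathbb{R}_+^3$: $\mathcal{M}_1(x,y,z)=(y+z,y,z)$, $\mathcal{M}_2(x,y,z)=(x,x+z,z)$, $\mathcal{M}_3(x,y,z)=(x,y,x+y)$. A $0$-initial triple is $(a,b,c)\in\mathbb{R}_+^3$ with $a\ne b+c$, $b\ne a+c$, $c\ne a+b$. A sequence with entries in $\{1,2,3\}$ is reduced if consecutive entries differ. $\log$ is the natural logarithm. *)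

(* Defs.v *)
From Stdlib Require Import Reals Lra Lia.
Open Scope R_scope.

Definition triple := (R * R * R)%type.

Definition tcomp (j : nat) (t : triple) : R :=
  let '(x1, x2, x3) := t in
  match j with 1%nat => x1 | 2%nat => x2 | _ => x3 end.

Definition gmu (l1 l2 l3 : nat) (i : nat) (t : triple) : triple :=
  let '(x1, x2, x3) := t in
  match i with
  | 1%nat => ((x2^2 + INR l1 * x2 * x3 + x3^2) / x1, x2, x3)
  | 2%nat => (x1, (x1^2 + INR l2 * x1 * x3 + x3^2) / x2, x3)
  | 3%nat => (x1, x2, (x1^2 + INR l3 * x1 * x2 + x2^2) / x3)
  | _ => t
  end.

Definition euclid (i : nat) (t : triple) : triple :=
  let '(x, y, z) := t in
  match i with
  | 1%nat => (y + z, y, z)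
  | 2%nat => (x, x + z, z)
  | 3%nat => (x, y, x + y)
  | _ => t
  end.

(* The infinite sequence w = [w_1, w_2, ...] is encoded as w : nat -> nat
   with w k = w_{k+1}.  markov_chain n = mu_{w_n} o ... o mu_{w_1} (1,1,1). *)
Fixpoint markov_chain (l1 l2 l3 : nat) (w : nat -> nat) (n : nat) : triple :=
  match n with
  | O => (1, 1, 1)
  | S m => gmu l1 l2 l3 (w m) (markov_chain l1 l2 l3 w m)
  end.

Fixpoint euclid_chain (w : nat -> nat) (t0 : triple) (n : nat) : triple :=
  match n with
  | O => t0
  | S m => euclid (w m) (euclid_chain w t0 m)
  end.

Definition reduced_seq (w : nat -> nat) : Prop :=
  (forall k, (1 <= w k <= 3)%nat) /\ (forall k, w k <> w (S k)).

Definition zero_initial (a b c : R) : Prop :=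
  0 < a /\ 0 < b /\ 0 < c /\ a <> b + c /\ b <> a + c /\ c <> a + b.

Definition appears_infinitely (w : nat -> nat) (i : nat) : Prop :=
  forall N, exists k, (N <= k)%nat /\ w k = i.

(* Main.v *)
Require Import Defs.
From Stdlib Require Import Reals.
Open Scope R_scope.
From Stdlib Require Import Lra Lia Psatz ZArith Classical.
From Coquelicot Require Import Coquelicot.
Open Scope R_scope.

Ltac idx_cases j := destruct j as [|[|[|[|j]]]]; try lia.

Definition tsum (t : triple) := tcomp 1 t + tcomp 2 t + tcomp 3 t.

Lemma euclid_comp i j t : (1 <= i <= 3)%nat -> (1 <= j <= 3)%nat ->
  tcomp j (euclid i t) = if Nat.eqb j i then tsum t - tcomp i t else tcomp j t.
Proof.
  intros Hi Hj. destruct t as [[x y] z]. unfold tsum.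
  idx_cases i; idx_cases j; simpl; ring.
Qed.

Lemma chain_shift w t0 k m :
  euclid_chain w t0 (k + m) = euclid_chain (fun p => w (k + p)%nat) (euclid_chain w t0 k) m.
Proof.
  induction m.
  - rewrite Nat.add_0_r. reflexivity.
  - rewrite Nat.add_succ_r. simpl. rewrite IHm. reflexivity.
Qed.

Lemma euclid_other i t m0 : (1 <= i <= 3)%nat ->
  (forall p, (1 <= p <= 3)%nat -> m0 <= tcomp p t) ->
  2 * m0 <= tsum t - tcomp i t.
Proof.
  intros Hi H. pose proof (H 1%nat ltac:(lia)). pose proof (H 2%nat ltac:(lia)).
  pose proof (H 3%nat ltac:(lia)). destruct t as [[x y] z]; unfold tsum in *.
  simpl in *. idx_cases i; simpl; lra.
Qed.

Lemma euclid_other2 i j t m0 : (1 <= i <= 3)%nat -> (1 <= j <= 3)%nat -> i <> j ->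
  (forall p, (1 <= p <= 3)%nat -> m0 <= tcomp p t) ->
  tcomp i t + m0 <= tsum t - tcomp j t.
Proof.
  intros Hi Hj Hij H. pose proof (H 1%nat ltac:(lia)). pose proof (H 2%nat ltac:(lia)).
  pose proof (H 3%nat ltac:(lia)). destruct t as [[x y] z]; unfold tsum in *.
  simpl in *. idx_cases i; idx_cases j; simpl; lra.
Qed.

Lemma trop_euclid i t : (1 <= i <= 3)%nat -> 2 * tcomp i (euclid i t) = tsum (euclid i t).
Proof.
  intros Hi. destruct t as [[x y] z]. unfold tsum. idx_cases i; simpl; ring.
Qed.

Definition cr (p q : nat) (X U : triple) := tcomp p X * tcomp q U - tcomp q X * tcomp p U.

Lemma cross_step i j X U : (1 <= i <= 3)%nat -> (1 <= j <= 3)%nat ->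
  2 * tcomp i X = tsum X -> 2 * tcomp i U = tsum U ->
  Rabs (cr 1 2 (euclid j X) (euclid j U)) = Rabs (cr 1 2 X U).
Proof.
  intros Hi Hj HX HU. destruct X as [[x1 x2] x3]. destruct U as [[u1 u2] u3].
  unfold tsum, cr in *.
  idx_cases i; simpl in *;
  [ assert (x1 = x2 + x3) by lra; assert (u1 = u2 + u3) by lra; subst x1 u1
  | assert (x2 = x1 + x3) by lra; assert (u2 = u1 + u3) by lra; subst x2 u2
  | assert (x3 = x1 + x2) by lra; assert (u3 = u1 + u2) by lra; subst x3 u3 ];
  idx_cases j; simpl;
  first [ f_equal; ring | rewrite <- Rabs_Ropp; f_equal; ring ].
Qed.

Lemma lim_C_over_n (C : R) : is_lim_seq (fun n => C / (INR n + 1)) 0.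
Proof.
  assert (H1 : is_lim_seq (fun n => INR n + 1) p_infty).
  { eapply is_lim_seq_plus. apply is_lim_seq_INR. apply is_lim_seq_const.
    simpl. reflexivity. }
  pose proof (is_lim_seq_inv _ _ H1 ltac:(discriminate)) as H2.
  pose proof (is_lim_seq_scal_l _ C _ H2) as H3. simpl in H3.
  rewrite Rmult_0_r in H3. eapply is_lim_seq_ext; [|exact H3].
  intros n. simpl. unfold Rdiv. reflexivity.
Qed.

Lemma mediant a b u v : 0 < u -> 0 < v ->
  Rmin (a/u) (b/v) <= (a+b)/(u+v) <= Rmax (a/u) (b/v).
Proof.
  intros Hu Hv.
  set (r := a/u). set (s := b/v).
  assert (Ha : a = r * u) by (unfold r; field; lra).
  assert (Hb : b = s * v) by (unfold s; field; lra).
  assert (Hm : (a+b)/(u+v) = (r*u + s*v)/(u+v)) by (rewrite Ha, Hb; reflexivity).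
  rewrite Hm. clear Hm Ha Hb.
  assert (Hpos : 0 < u + v) by lra.
  destruct (Rle_dec r s).
  - rewrite Rmin_left by lra. rewrite Rmax_right by lra.
    split; [apply Rmult_le_reg_r with (u+v); [lra|]; unfold Rdiv; rewrite Rmult_assoc, Rinv_l by lra; nra
           |apply Rmult_le_reg_r with (u+v); [lra|]; unfold Rdiv; rewrite Rmult_assoc, Rinv_l by lra; nra].
  - rewrite Rmin_right by lra. rewrite Rmax_left by lra.
    split; [apply Rmult_le_reg_r with (u+v); [lra|]; unfold Rdiv; rewrite Rmult_assoc, Rinv_l by lra; nra
           |apply Rmult_le_reg_r with (u+v); [lra|]; unfold Rdiv; rewrite Rmult_assoc, Rinv_l by lra; nra].
Qed.

Lemma trop_cross_eq i X U : (1 <= i <= 3)%nat ->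
  2 * tcomp i X = tsum X -> 2 * tcomp i U = tsum U ->
  Rabs (cr 1 3 X U) = Rabs (cr 1 2 X U) /\ Rabs (cr 2 3 X U) = Rabs (cr 1 2 X U).
Proof.
  intros Hi HX HU. destruct X as [[x1 x2] x3]. destruct U as [[u1 u2] u3].
  unfold tsum, cr in *.
  idx_cases i; simpl in *;
  [ assert (x1 = x2 + x3) by lra; assert (u1 = u2 + u3) by lra; subst x1 u1
  | assert (x2 = x1 + x3) by lra; assert (u2 = u1 + u3) by lra; subst x2 u2
  | assert (x3 = x1 + x2) by lra; assert (u3 = u1 + u2) by lra; subst x3 u3 ];
  split; first [ f_equal; ring | rewrite <- Rabs_Ropp; f_equal; ring ].
Qed.

Lemma pair_bound i j t A m0 : (1 <= i <= 3)%nat -> (1 <= j <= 3)%nat -> i <> j ->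
  0 <= A -> 0 < m0 -> A <= tcomp i t -> A <= tcomp j t ->
  (forall p, (1 <= p <= 3)%nat -> m0 <= tcomp p t) ->
  A * m0 <= tcomp 1 t * tcomp 2 t /\ A * m0 <= tcomp 1 t * tcomp 3 t /\
  A * m0 <= tcomp 2 t * tcomp 3 t.
Proof.
  intros Hi Hj Hij HA Hm Hti Htj H. pose proof (H 1%nat ltac:(lia)). pose proof (H 2%nat ltac:(lia)).
  pose proof (H 3%nat ltac:(lia)). destruct t as [[x y] z]. simpl in *.
  idx_cases i; idx_cases j; simpl in *; repeat split; nra.
Qed.

Lemma ratio_diff x1 x2 u1 u2 : 0 < u1 -> 0 < u2 ->
  x1/u1 - x2/u2 = (x1*u2 - x2*u1)/(u1*u2).
Proof. intros; field; lra. Qed.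

Lemma abs_div_bound (c p G A : R) : 0 < A -> A <= p -> Rabs c = G ->
  Rabs (c / p) <= G / A.
Proof.
  intros HA Hp Hc. assert (0 < p) by lra.
  rewrite Rabs_div by lra. rewrite Hc, (Rabs_right p) by lra.
  assert (0 <= G) by (rewrite <- Hc; apply Rabs_pos).
  unfold Rdiv. apply Rmult_le_compat_l; [lra|]. apply Rinv_le_contravar; lra.
Qed.

Lemma diff_bound x1 x2 x3 u1 u2 u3 G A : 0 < A -> 0 < u1 -> 0 < u2 -> 0 < u3 ->
  A <= u1*u2 -> A <= u1*u3 -> A <= u2*u3 ->
  Rabs (x1*u2 - x2*u1) = G -> Rabs (x1*u3 - x3*u1) = G -> Rabs (x2*u3 - x3*u2) = G ->
  forall p q, (1 <= p <= 3)%nat -> (1 <= q <= 3)%nat ->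
  tcomp p (x1,x2,x3) / tcomp p (u1,u2,u3) - tcomp q (x1,x2,x3) / tcomp q (u1,u2,u3) <= G / A.
Proof.
  intros HA H1 H2 H3 P12 P13 P23 E12 E13 E23 p q Hp Hq.
  assert (G0 : 0 <= G) by (rewrite <- E12; apply Rabs_pos).
  assert (G/A >= 0).
  { apply Rle_ge. apply Rmult_le_pos; [lra| left; apply Rinv_0_lt_compat; lra]. }
  idx_cases p; idx_cases q; simpl; try lra;
  rewrite ratio_diff by lra;
  match goal with |- ?c / ?pp <= _ =>
        apply Rle_trans with (Rabs (c / pp)); [apply Rle_abs|];
        apply abs_div_bound; [lra | lra | ]
  end;
  first [ assumption
        | rewrite <- E12; rewrite <- Rabs_Ropp; f_equal; ring
        | rewrite <- E13; rewrite <- Rabs_Ropp; f_equal; ring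
        | rewrite <- E23; rewrite <- Rabs_Ropp; f_equal; ring ].
Qed.

Lemma step_ratio j p x1 x2 x3 u1 u2 u3 : (1 <= j <= 3)%nat -> (1 <= p <= 3)%nat ->
  0 < u1 -> 0 < u2 -> 0 < u3 ->
  Rmin (x1/u1) (Rmin (x2/u2) (x3/u3)) <=
    tcomp p (euclid j (x1,x2,x3)) / tcomp p (euclid j (u1,u2,u3)) <=
  Rmax (x1/u1) (Rmax (x2/u2) (x3/u3)).
Proof.
  intros Hj Hp H1 H2 H3.
  pose proof (mediant x2 x3 u2 u3 H2 H3).
  pose proof (mediant x1 x3 u1 u3 H1 H3).
  pose proof (mediant x1 x2 u1 u2 H1 H2).
  set (a1 := x1/u1) in *. set (a2 := x2/u2) in *. set (a3 := x3/u3) in *.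
  idx_cases j; idx_cases p; simpl;
  fold a1 a2 a3;
  unfold Rmin, Rmax in *; repeat destruct Rle_dec; lra.
Qed.

Lemma ratio_lemma (w : nat -> nat) (X0 U0 : triple) (m0 : R) :
  (forall k, (1 <= w k <= 3)%nat) -> (forall k, w k <> w (S k)) -> 0 < m0 ->
  (forall p, (1 <= p <= 3)%nat -> m0 <= tcomp p U0) ->
  exists q : R, forall j, (1 <= j <= 3)%nat ->
    is_lim_seq (fun n => tcomp j (euclid_chain w X0 n) / tcomp j (euclid_chain w U0 n)) q.
Proof.
  intros Hw Hr Hm0 HU0.
  set (X := euclid_chain w X0). set (U := euclid_chain w U0).
  assert (HXS : forall n, X (S n) = euclid (w n) (X n)) by reflexivity.
  assert (HUS : forall n, U (S n) = euclid (w n) (U n)) by reflexivity.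
  assert (HUp : forall n p, (1 <= p <= 3)%nat -> m0 <= tcomp p (U n)).
  { induction n; intros p Hp. exact (HU0 p Hp).
    rewrite HUS, euclid_comp by auto. destruct (Nat.eqb p (w n)).
    - pose proof (euclid_other (w n) (U n) m0 (Hw n) IHn). lra.
    - auto. }
  assert (HtX : forall n, 2 * tcomp (w n) (X (S n)) = tsum (X (S n))).
  { intros n. rewrite HXS. apply trop_euclid, Hw. }
  assert (HtU : forall n, 2 * tcomp (w n) (U (S n)) = tsum (U (S n))).
  { intros n. rewrite HUS. apply trop_euclid, Hw. }
  set (G := Rabs (cr 1 2 (X 1%nat) (U 1%nat))).
  assert (HG : forall n, Rabs (cr 1 2 (X (S n)) (U (S n))) = G).
  { induction n. reflexivity.
    rewrite HXS, HUS. rewrite cross_step with (i := w n); auto. }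
  assert (HL : forall n, INR (S n) * m0 <= tcomp (w n) (U (S n))).
  { induction n.
    - rewrite HUS, euclid_comp by auto. rewrite Nat.eqb_refl.
      pose proof (euclid_other (w 0%nat) (U 0%nat) m0 (Hw 0%nat) (HUp 0%nat)). simpl. lra.
    - rewrite HUS, euclid_comp by auto. rewrite Nat.eqb_refl.
      pose proof (euclid_other2 (w n) (w (S n)) (U (S n)) m0 (Hw n) (Hw (S n)) (Hr n) (HUp (S n))).
      rewrite S_INR. lra. }
  assert (Hpair : forall n, INR (S n) * m0 * m0 <= tcomp 1 (U (S (S n))) * tcomp 2 (U (S (S n))) /\
      INR (S n) * m0 * m0 <= tcomp 1 (U (S (S n))) * tcomp 3 (U (S (S n))) /\
      INR (S n) * m0 * m0 <= tcomp 2 (U (S (S n))) * tcomp 3 (U (S (S n)))).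
  { intros n. apply (pair_bound (w n) (w (S n))); auto.
    - apply Rmult_le_pos; [apply pos_INR | lra].
    - rewrite HUS, euclid_comp by auto.
      replace (Nat.eqb (w n) (w (S n))) with false.
      2:{ symmetry. apply Nat.eqb_neq. auto. }
      apply HL.
    - pose proof (HL (S n)). rewrite (S_INR (S n)) in H. lra. }
  set (r := fun p n => tcomp p (X n) / tcomp p (U n)).
  assert (Hdiff : forall n p q, (1 <= p <= 3)%nat -> (1 <= q <= 3)%nat ->
     r p (S (S n)) - r q (S (S n)) <= G / (INR (S n) * m0 * m0)).
  { intros n p q Hp Hq.
    destruct (trop_cross_eq (w (S n)) (X (S (S n))) (U (S (S n))) (Hw _) (HtX _) (HtU _)) as [E13 E23].
    specialize (HG (S n)). destruct (Hpair n) as [P12 [P13 P23]].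
    pose proof (HUp (S (S n)) 1%nat ltac:(lia)). pose proof (HUp (S (S n)) 2%nat ltac:(lia)).
    pose proof (HUp (S (S n)) 3%nat ltac:(lia)).
    assert (HA : 0 < INR (S n) * m0 * m0).
    { apply Rmult_lt_0_compat; [apply Rmult_lt_0_compat; [apply lt_0_INR; lia|lra]|lra]. }
    unfold r. rewrite HG in E13, E23.
    destruct (X (S (S n))) as [[x1 x2] x3]; destruct (U (S (S n))) as [[u1 u2] u3].
    unfold cr in *; simpl in *.
    apply diff_bound; auto; lra. }
  set (lo := fun n => Rmin (r 1%nat n) (Rmin (r 2%nat n) (r 3%nat n))).
  set (hi := fun n => Rmax (r 1%nat n) (Rmax (r 2%nat n) (r 3%nat n))).
  assert (Hstep : forall n p, (1 <= p <= 3)%nat -> lo n <= r p (S n) <= hi n).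
  { intros n p Hp. unfold lo, hi, r. rewrite HXS, HUS.
    pose proof (HUp n 1%nat ltac:(lia)). pose proof (HUp n 2%nat ltac:(lia)).
    pose proof (HUp n 3%nat ltac:(lia)).
    destruct (X n) as [[x1 x2] x3]; destruct (U n) as [[u1 u2] u3]. simpl in *.
    apply step_ratio; auto; lra. }
  assert (Hlohi : forall n p, (1 <= p <= 3)%nat -> lo n <= r p n <= hi n).
  { intros n p Hp. unfold lo, hi. idx_cases p; simpl;
    unfold Rmin, Rmax; repeat destruct Rle_dec; lra. }
  assert (Hlo : forall n, lo n <= lo (S n)).
  { intros n. unfold lo at 2.
    apply Rmin_glb; [|apply Rmin_glb]; apply Hstep; lia. }
  assert (Hhi : forall n, hi (S n) <= hi n).
  { intros n. unfold hi at 1.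
    apply Rmax_lub; [|apply Rmax_lub]; apply Hstep; lia. }
  assert (Hhi0 : forall n, hi n <= hi 0%nat).
  { induction n. lra. specialize (Hhi n). lra. }
  assert (Hlob : forall n, lo n <= hi 0%nat).
  { intros n. pose proof (Hlohi n 1%nat ltac:(lia)). pose proof (Hhi0 n). lra. }
  destruct (ex_finite_lim_seq_incr lo (hi 0%nat) Hlo Hlob) as [l Hl].
  assert (Hgap : is_lim_seq (fun n => hi n - lo n) 0).
  { apply is_lim_seq_incr_n with (N := 2%nat).
    apply is_lim_seq_ext with (u := fun n => hi (S (S n)) - lo (S (S n))).
    { intros n. rewrite Nat.add_comm. reflexivity. }
    apply is_lim_seq_le_le with (u := fun _ => 0) (w := fun n => G / (m0*m0) / (INR n + 1)).
    - intros n. split.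
      + pose proof (Hlohi (S (S n)) 1%nat ltac:(lia)). lra.
      + assert (E : G / (m0*m0) / (INR n + 1) = G / (INR (S n) * m0 * m0)).
        { rewrite S_INR. field. split; [lra|]. pose proof (pos_INR n). lra. }
        rewrite E.
        assert (hi (S (S n)) <= lo (S (S n)) + G / (INR (S n) * m0 * m0)); [|lra].
        assert (Hp : forall p, (1 <= p <= 3)%nat ->
                  r p (S (S n)) <= lo (S (S n)) + G / (INR (S n) * m0 * m0)).
        { intros p Hp. cut (r p (S (S n)) - G / (INR (S n) * m0 * m0) <= lo (S (S n))); [lra|].
          unfold lo. apply Rmin_glb; [|apply Rmin_glb];
          match goal with |- _ <= r ?q _ => pose proof (Hdiff n p q Hp ltac:(lia)) end; lra. }
        unfold hi at 1.
        apply Rmax_lub; [|apply Rmax_lub]; apply Hp; lia.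
    - apply is_lim_seq_const.
    - apply lim_C_over_n. }
  assert (Hhil : is_lim_seq hi l).
  { apply is_lim_seq_ext with (u := fun n => lo n + (hi n - lo n)).
    { intros n. ring. }
    replace l with (l + 0) by ring. apply is_lim_seq_plus'; auto. }
  exists l. intros j Hj.
  apply is_lim_seq_le_le with (u := lo) (w := hi); auto.
  intros n. apply (Hlohi n j Hj).
Qed.

Lemma GL (la lb lc K xi xa xc y : R) :
  0 <= la -> 0 <= lb -> 0 <= lc -> K = 3 + la + lb + lc ->
  1 <= xi -> 1 <= xa -> 1 <= xc ->
  xi^2 + xa^2 + xc^2 + la*xi*xa + lb*xa*xc + lc*xc*xi = K*xi*xa*xc ->
  xi * y = xa^2 + lb*xa*xc + xc^2 ->
  xi * xc <= xa ->
  2 * xa * xc <= y /\ y <= K * xa * xc /\ xi <= y /\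
  (forall m, 1 <= m -> m <= xa -> m <= xc ->
     m * (K * xa * xc - y) <= (la + lb + lc + 1) * y) /\
  y^2 + xa^2 + xc^2 + la*y*xa + lb*xa*xc + lc*xc*y = K*y*xa*xc.
Proof.
  intros Hla Hlb Hlc HK Hi Ha Hc Heq Hy Hl.
  assert (E : y = K*xa*xc - la*xa - lc*xc - xi).
  { apply Rmult_eq_reg_l with xi; [|lra]. rewrite Hy. nra. }
  assert (Hxi : xi <= xa) by nra.
  assert (H2 : 2 * xa * xc <= y).
  { assert (0 <= la * xa * (xc - 1)) by (apply Rmult_le_pos; nra).
    assert (0 <= lc * xc * (xa - 1)) by (apply Rmult_le_pos; nra).
    assert (0 <= lb * (xa * xc)) by (apply Rmult_le_pos; nra).
    assert (xa <= xa * xc) by nra.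
    rewrite E, HK. nra. }
  assert (0 <= la * xa) by (apply Rmult_le_pos; lra).
  assert (0 <= lc * xc) by (apply Rmult_le_pos; lra).
  assert (xa <= xa * xc) by nra.
  split; [exact H2|]. split; [rewrite E; lra|]. split; [lra|]. split.
  - intros m Hm1 Hma Hmc. rewrite E at 1.
    assert (m * la * xa <= la * xa * xc) by nra.
    assert (m * lc * xc <= lc * xa * xc) by nra.
    assert (m * xi <= xa * xc) by nra.
    assert (lb * xa * xc >= 0) by nra.
    assert (xa * xc <= y) by nra.
    assert ((la + lb + lc + 1) * (xa*xc) <= (la + lb + lc + 1) * y) by nra.
    nra.
  - rewrite E. rewrite E in Hy. nra.
Qed.

Definition Kc (l1 l2 l3 : nat) := 3 + INR l1 + INR l2 + INR l3.
Definition Lam (l1 l2 l3 : nat) := INR l1 + INR l2 + INR l3 + 1.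
Definition Meq (l1 l2 l3 : nat) (t : triple) : Prop :=
  let '(x1, x2, x3) := t in
  x1^2 + x2^2 + x3^2 + INR l3*x1*x2 + INR l1*x2*x3 + INR l2*x3*x1 = Kc l1 l2 l3 * x1 * x2 * x3.
Definition tprod (t : triple) := tcomp 1 t * tcomp 2 t * tcomp 3 t.
Definition Inv l1 l2 l3 (t : triple) (i : nat) : Prop :=
  (forall p, (1 <= p <= 3)%nat -> 1 <= tcomp p t) /\ Meq l1 l2 l3 t /\
  tprod t <= tcomp i t * tcomp i t.
Definition oprod (j : nat) (t : triple) : R :=
  let '(x1, x2, x3) := t in
  match j with 1%nat => x2 * x3 | 2%nat => x1 * x3 | _ => x1 * x2 end.

Lemma gmu_other l1 l2 l3 j p t : (1 <= j <= 3)%nat -> (1 <= p <= 3)%nat -> p <> j ->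
  tcomp p (gmu l1 l2 l3 j t) = tcomp p t.
Proof.
  intros Hj Hp Hpj. destruct t as [[x y] z]. idx_cases j; idx_cases p; simpl; try lia; reflexivity.
Qed.

Ltac fin :=
  repeat split;
  [ intros p Hp; idx_cases p; simpl; nra
  | nra
  | nra
  | nra
  | lra
  | lra
  | let m := fresh "m" in let Hm := fresh "Hm" in let Hp := fresh "Hp" in
    intros m Hm Hp;
    pose proof (Hp 1%nat ltac:(lia)); pose proof (Hp 2%nat ltac:(lia)); pose proof (Hp 3%nat ltac:(lia));
    simpl in *;
    match goal with G : forall m : R, _ |- _ => specialize (G m Hm ltac:(lra) ltac:(lra)) end;
    lra ].

Lemma mstep l1 l2 l3 t i j : (1 <= i <= 3)%nat -> (1 <= j <= 3)%nat -> i <> j ->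
  Inv l1 l2 l3 t i ->
  Inv l1 l2 l3 (gmu l1 l2 l3 j t) j /\
  2 * tcomp i t <= tcomp j (gmu l1 l2 l3 j t) /\
  tcomp j t <= tcomp j (gmu l1 l2 l3 j t) /\
  tcomp j (gmu l1 l2 l3 j t) <= Kc l1 l2 l3 * oprod j t /\
  (forall m, 1 <= m -> (forall p, (1 <= p <= 3)%nat -> m <= tcomp p t) ->
     m * (Kc l1 l2 l3 * oprod j t - tcomp j (gmu l1 l2 l3 j t)) <= Lam l1 l2 l3 * tcomp j (gmu l1 l2 l3 j t)).
Proof.
  intros Hi Hj Hij [Hge [Heq Hl]].
  destruct t as [[x1 x2] x3].
  pose proof (Hge 1%nat ltac:(lia)) as H1. pose proof (Hge 2%nat ltac:(lia)) as H2.
  pose proof (Hge 3%nat ltac:(lia)) as H3. simpl in H1, H2, H3.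
  pose proof (pos_INR l1). pose proof (pos_INR l2). pose proof (pos_INR l3).
  unfold Inv, Meq, tprod, Lam in *. simpl in Heq, Hl.
  idx_cases i; idx_cases j; try lia; simpl.
  - match goal with |- context [ (?n) / ?d ] => set (y := n / d) end.
    assert (Hy : x2 * y = x1^2 + INR l2 * x1 * x3 + x3^2) by (unfold y; field; lra).
    assert (Hlast : x2 * x3 <= x1) by nra.
    destruct (GL (INR l3) (INR l2) (INR l1) (Kc l1 l2 l3) x2 x1 x3 y) as [G1 [G2 [G3 [G4 G5]]]];
      try lra; try (unfold Kc; lra).
    fin.
  - match goal with |- context [ (?n) / ?d ] => set (y := n / d) end.
    assert (Hy : x3 * y = x1^2 + INR l3 * x1 * x2 + x2^2) by (unfold y; field; lra).
    assert (Hlast : x3 * x2 <= x1) by nra.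
    destruct (GL (INR l2) (INR l3) (INR l1) (Kc l1 l2 l3) x3 x1 x2 y) as [G1 [G2 [G3 [G4 G5]]]];
      try lra; try (unfold Kc; lra).
    fin.
  - match goal with |- context [ (?n) / ?d ] => set (y := n / d) end.
    assert (Hy : x1 * y = x2^2 + INR l1 * x2 * x3 + x3^2) by (unfold y; field; lra).
    assert (Hlast : x1 * x3 <= x2) by nra.
    destruct (GL (INR l3) (INR l1) (INR l2) (Kc l1 l2 l3) x1 x2 x3 y) as [G1 [G2 [G3 [G4 G5]]]];
      try lra; try (unfold Kc; lra).
    fin.
  - match goal with |- context [ (?n) / ?d ] => set (y := n / d) end.
    assert (Hy : x3 * y = x2^2 + INR l3 * x2 * x1 + x1^2) by (unfold y; field; lra).
    assert (Hlast : x3 * x1 <= x2) by nra.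
    destruct (GL (INR l1) (INR l3) (INR l2) (Kc l1 l2 l3) x3 x2 x1 y) as [G1 [G2 [G3 [G4 G5]]]];
      try lra; try (unfold Kc; lra).
    fin.
  - match goal with |- context [ (?n) / ?d ] => set (y := n / d) end.
    assert (Hy : x1 * y = x3^2 + INR l1 * x3 * x2 + x2^2) by (unfold y; field; lra).
    assert (Hlast : x1 * x2 <= x3) by nra.
    destruct (GL (INR l2) (INR l1) (INR l3) (Kc l1 l2 l3) x1 x3 x2 y) as [G1 [G2 [G3 [G4 G5]]]];
      try lra; try (unfold Kc; lra).
    fin.
  - match goal with |- context [ (?n) / ?d ] => set (y := n / d) end.
    assert (Hy : x2 * y = x3^2 + INR l2 * x3 * x1 + x1^2) by (unfold y; field; lra).
    assert (Hlast : x2 * x1 <= x3) by nra.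
    destruct (GL (INR l1) (INR l2) (INR l3) (Kc l1 l2 l3) x2 x3 x1 y) as [G1 [G2 [G3 [G4 G5]]]];
      try lra; try (unfold Kc; lra).
    fin.
Qed.

Lemma nat_above (M : R) : exists N : nat, M <= INR N.
Proof.
  destruct (archimed M) as [H1 H2].
  destruct (Z_lt_le_dec 0%Z (up M)) as [Hz|Hz].
  - exists (Z.to_nat (up M)). rewrite INR_IZR_INZ, Z2Nat.id by lia. lra.
  - exists 0%nat. simpl. apply IZR_le in Hz. lra.
Qed.

Lemma mono_le (f : nat -> R) : (forall n, f n <= f (S n)) -> forall n m, (n <= m)%nat -> f n <= f m.
Proof.
  intros H n m Hnm. induction Hnm. lra. specialize (H m). lra.
Qed.

Lemma mono_le_from (f : nat -> R) k : (forall n, (k <= n)%nat -> f n <= f (S n)) ->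
  forall n m, (k <= n)%nat -> (n <= m)%nat -> f n <= f m.
Proof.
  intros H n m Hk Hnm. induction Hnm. lra. specialize (H m ltac:(lia)). lra.
Qed.

Lemma Inv1 l1 l2 l3 i : (1 <= i <= 3)%nat -> Inv l1 l2 l3 (1,1,1) i.
Proof.
  intros Hi. unfold Inv, Meq, Kc, tprod. split; [|split].
  - intros p Hp. idx_cases p; simpl; lra.
  - lra.
  - idx_cases i; simpl; lra.
Qed.

Section Markov.
Variables (l1 l2 l3 : nat) (w : nat -> nat).
Hypothesis Hw : forall k, (1 <= w k <= 3)%nat.
Hypothesis Hr : forall k, w k <> w (S k).
Let Mk := markov_chain l1 l2 l3 w.

Lemma MkS n : Mk (S n) = gmu l1 l2 l3 (w n) (Mk n).
Proof. reflexivity. Qed.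

Lemma minv : forall n, Inv l1 l2 l3 (Mk (S n)) (w n).
Proof.
  induction n.
  - rewrite MkS. simpl markov_chain.
    set (i := if Nat.eqb (w 0%nat) 1 then 2%nat else 1%nat).
    assert (Hi : (1 <= i <= 3)%nat) by (unfold i; destruct Nat.eqb; lia).
    assert (Hiw : i <> w 0%nat).
    { unfold i. destruct (Nat.eqb (w 0%nat) 1) eqn:E. apply Nat.eqb_eq in E. lia.
      apply Nat.eqb_neq in E. lia. }
    apply (mstep l1 l2 l3 (1,1,1) i (w 0%nat) Hi (Hw 0%nat) Hiw (Inv1 l1 l2 l3 i Hi)).
  - rewrite MkS. apply (mstep l1 l2 l3 _ (w n) (w (S n)) (Hw n) (Hw (S n)) (Hr n) IHn).
Qed.

Lemma mstepn n : 
  2 * tcomp (w n) (Mk (S n)) <= tcomp (w (S n)) (Mk (S (S n))) /\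
  tcomp (w (S n)) (Mk (S n)) <= tcomp (w (S n)) (Mk (S (S n))) /\
  tcomp (w (S n)) (Mk (S (S n))) <= Kc l1 l2 l3 * oprod (w (S n)) (Mk (S n)) /\
  (forall m, 1 <= m -> (forall p, (1 <= p <= 3)%nat -> m <= tcomp p (Mk (S n))) ->
     m * (Kc l1 l2 l3 * oprod (w (S n)) (Mk (S n)) - tcomp (w (S n)) (Mk (S (S n))))
       <= Lam l1 l2 l3 * tcomp (w (S n)) (Mk (S (S n)))).
Proof.
  rewrite (MkS (S n)).
  destruct (mstep l1 l2 l3 _ (w n) (w (S n)) (Hw n) (Hw (S n)) (Hr n) (minv n)) as [_ H]. exact H.
Qed.

Lemma mge1 n p : (1 <= p <= 3)%nat -> 1 <= tcomp p (Mk n).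
Proof.
  intros Hp. destruct n.
  - simpl. idx_cases p; simpl; lra.
  - destruct (minv n) as [H _]. auto.
Qed.

Lemma mmono n p : (1 <= p <= 3)%nat -> tcomp p (Mk n) <= tcomp p (Mk (S n)).
Proof.
  intros Hp. destruct n.
  - pose proof (mge1 1 p Hp). assert (tcomp p (Mk 0%nat) = 1) by (simpl; idx_cases p; reflexivity). lra.
  - destruct (Nat.eq_dec p (w (S n))) as [E|E].
    + subst p. apply (mstepn n).
    + rewrite (MkS (S n)), gmu_other; auto. lra.
Qed.

Lemma mmono_le n m p : (1 <= p <= 3)%nat -> (n <= m)%nat -> tcomp p (Mk n) <= tcomp p (Mk m).
Proof.
  intros Hp Hnm. apply (mono_le (fun k => tcomp p (Mk k))); auto.
  intros k. apply mmono; auto.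
Qed.

Lemma mL n : INR (S n) <= tcomp (w n) (Mk (S n)).
Proof.
  induction n.
  - simpl INR. apply mge1; auto.
  - destruct (mstepn n) as [H _]. rewrite S_INR. pose proof (mge1 (S n) (w n) (Hw n)). lra.
Qed.

Lemma markov_unbounded :
  (forall i, (1 <= i <= 3)%nat -> appears_infinitely w i) ->
  forall M, exists N, forall n, (N <= n)%nat -> forall p, (1 <= p <= 3)%nat -> M <= tcomp p (Mk n).
Proof.
  intros Happ M. destruct (nat_above M) as [NM HNM].
  destruct (Happ 1%nat ltac:(lia) NM) as [k1 [Hk1 E1]].
  destruct (Happ 2%nat ltac:(lia) NM) as [k2 [Hk2 E2]].
  destruct (Happ 3%nat ltac:(lia) NM) as [k3 [Hk3 E3]].
  exists (S k1 + S k2 + S k3)%nat. intros n Hn p Hp.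
  assert (Hgen : forall k, w k = p -> (NM <= k)%nat -> (S k <= n)%nat -> M <= tcomp p (Mk n)).
  { intros k Ek Hk Hkn. pose proof (mL k). rewrite Ek in H.
    pose proof (mmono_le (S k) n p Hp Hkn).
    assert (INR NM <= INR (S k)) by (apply le_INR; lia). lra. }
  idx_cases p; [apply (Hgen k1) | apply (Hgen k2) | apply (Hgen k3)]; auto; lia.
Qed.

End Markov.

Lemma trop_mono i j t : (1 <= i <= 3)%nat -> (1 <= j <= 3)%nat -> i <> j ->
  2 * tcomp i t = tsum t -> (forall p, (1 <= p <= 3)%nat -> 0 <= tcomp p t) ->
  tcomp j t <= tsum t - tcomp j t.
Proof.
  intros Hi Hj Hij Ht H. pose proof (H 1%nat ltac:(lia)). pose proof (H 2%nat ltac:(lia)).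
  pose proof (H 3%nat ltac:(lia)). destruct t as [[x y] z]; unfold tsum in *.
  simpl in *. idx_cases i; idx_cases j; simpl in *; lra.
Qed.

Section Euclid.
Variables (w : nat -> nat) (U0 : triple) (m0 : R).
Hypothesis Hw : forall k, (1 <= w k <= 3)%nat.
Hypothesis Hr : forall k, w k <> w (S k).
Hypothesis Hm0 : 0 < m0.
Hypothesis HU0 : forall p, (1 <= p <= 3)%nat -> m0 <= tcomp p U0.
Let U := euclid_chain w U0.

Lemma U_pos n p : (1 <= p <= 3)%nat -> m0 <= tcomp p (U n).
Proof.
  revert p. induction n; intros p Hp. exact (HU0 p Hp).
  change (U (S n)) with (euclid (w n) (U n)). rewrite euclid_comp by auto.
  destruct (Nat.eqb p (w n)).
  - pose proof (euclid_other (w n) (U n) m0 (Hw n) IHn). lra.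
  - auto.
Qed.

Lemma U_L n : INR (S n) * m0 <= tcomp (w n) (U (S n)).
Proof.
  induction n.
  - change (U 1%nat) with (euclid (w 0%nat) (U 0%nat)). rewrite euclid_comp by auto. rewrite Nat.eqb_refl.
    pose proof (euclid_other (w 0%nat) (U 0%nat) m0 (Hw 0%nat) (U_pos 0%nat)). simpl. lra.
  - change (U (S (S n))) with (euclid (w (S n)) (U (S n))). rewrite euclid_comp by auto. rewrite Nat.eqb_refl.
    pose proof (euclid_other2 (w n) (w (S n)) (U (S n)) m0 (Hw n) (Hw (S n)) (Hr n) (U_pos (S n))).
    rewrite S_INR. lra.
Qed.

Lemma U_mono n p : (1 <= p <= 3)%nat -> tcomp p (U (S n)) <= tcomp p (U (S (S n))).
Proof.
  intros Hp. change (U (S (S n))) with (euclid (w (S n)) (U (S n))). rewrite euclid_comp by auto.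
  destruct (Nat.eqb p (w (S n))) eqn:E; [|lra].
  apply Nat.eqb_eq in E. subst p.
  apply (trop_mono (w n)); auto.
  - change (U (S n)) with (euclid (w n) (U n)). apply trop_euclid; auto.
  - intros q Hq. pose proof (U_pos (S n) q Hq). lra.
Qed.

Lemma U_mono_le n m p : (1 <= p <= 3)%nat -> (1 <= n)%nat -> (n <= m)%nat -> tcomp p (U n) <= tcomp p (U m).
Proof.
  intros Hp H1 Hnm. apply (mono_le_from (fun k => tcomp p (U k)) 1); auto.
  intros k Hk. destruct k. lia. apply U_mono; auto.
Qed.

Lemma U_unbounded :
  (forall i, (1 <= i <= 3)%nat -> appears_infinitely w i) ->
  forall M, exists N, forall n, (N <= n)%nat -> forall p, (1 <= p <= 3)%nat -> M <= tcomp p (U n).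
Proof.
  intros Happ M. destruct (nat_above (M / m0)) as [NM HNM].
  destruct (Happ 1%nat ltac:(lia) NM) as [k1 [Hk1 E1]].
  destruct (Happ 2%nat ltac:(lia) NM) as [k2 [Hk2 E2]].
  destruct (Happ 3%nat ltac:(lia) NM) as [k3 [Hk3 E3]].
  exists (S k1 + S k2 + S k3)%nat. intros n Hn p Hp.
  assert (Hgen : forall k, w k = p -> (NM <= k)%nat -> (S k <= n)%nat -> M <= tcomp p (U n)).
  { intros k Ek Hk Hkn. pose proof (U_L k). rewrite Ek in H.
    pose proof (U_mono_le (S k) n p Hp ltac:(lia) Hkn).
    assert (INR NM <= INR (S k)) by (apply le_INR; lia).
    assert (M <= INR (S k) * m0).
    { apply Rle_trans with (M / m0 * m0). right; field; lra. apply Rmult_le_compat_r; lra. }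
    lra. }
  idx_cases p; [apply (Hgen k1) | apply (Hgen k2) | apply (Hgen k3)]; auto; lia.
Qed.

End Euclid.

Definition wmap (K : R) (t : triple) : triple :=
  let '(x1, x2, x3) := t in (ln (K * x1), ln (K * x2), ln (K * x3)).

Lemma wmap_comp K t p : tcomp p (wmap K t) = ln (K * tcomp p t).
Proof. destruct t as [[x y] z]. destruct p as [|[|[|p]]]; reflexivity. Qed.

Lemma wmap_osum K t j : (1 <= j <= 3)%nat -> 0 < K ->
  (forall p, (1 <= p <= 3)%nat -> 0 < tcomp p t) ->
  tsum (wmap K t) - tcomp j (wmap K t) = ln (K * (K * oprod j t)).
Proof.
  intros Hj HK H. pose proof (H 1%nat ltac:(lia)). pose proof (H 2%nat ltac:(lia)).
  pose proof (H 3%nat ltac:(lia)). destruct t as [[x1 x2] x3]. unfold tsum. simpl in *.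
  idx_cases j; simpl;
  match goal with |- _ = ln (K * (K * (?u * ?v))) =>
    replace (K * (K * (u * v))) with ((K * u) * (K * v)) by ring;
    rewrite (ln_mult (K * u) (K * v)) by (apply Rmult_lt_0_compat; lra); ring end.
Qed.

Lemma ln1p_le x : 0 <= x -> ln (1 + x) <= x.
Proof.
  intros Hx. rewrite <- (ln_exp x) at 2. apply ln_le. lra. apply exp_ineq1_le.
Qed.

Lemma oprod_pos j t : (forall p, (1 <= p <= 3)%nat -> 0 < tcomp p t) -> 0 < oprod j t.
Proof.
  intros H. pose proof (H 1%nat ltac:(lia)). pose proof (H 2%nat ltac:(lia)). pose proof (H 3%nat ltac:(lia)).
  destruct t as [[x1 x2] x3]; simpl in *. destruct j as [|[|[|]]]; simpl; apply Rmult_lt_0_compat; lra.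
Qed.

Lemma SW_step j X W W' U eps eta : (1 <= j <= 3)%nat ->
  (forall p, (1 <= p <= 3)%nat -> 0 <= tcomp p X - tcomp p W <= eps * tcomp p U - eta) ->
  (forall p, (1 <= p <= 3)%nat -> p <> j -> tcomp p W' = tcomp p W) ->
  tsum W - tcomp j W - eta <= tcomp j W' <= tsum W - tcomp j W ->
  forall p, (1 <= p <= 3)%nat ->
    0 <= tcomp p (euclid j X) - tcomp p W' <= eps * tcomp p (euclid j U) - eta.
Proof.
  intros Hj H HW' Hb p Hp. rewrite !euclid_comp by auto.
  destruct (Nat.eqb p j) eqn:E.
  - apply Nat.eqb_eq in E. subst p.
    pose proof (H 1%nat ltac:(lia)). pose proof (H 2%nat ltac:(lia)). pose proof (H 3%nat ltac:(lia)).
    destruct X as [[x1 x2] x3]; destruct W as [[v1 v2] v3]; destruct U as [[u1 u2] u3].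
    unfold tsum in *. simpl in *. idx_cases j; simpl in *; lra.
  - apply Nat.eqb_neq in E. rewrite HW' by auto. apply H; auto.
Qed.

Section Sandwich.
Variables (l1 l2 l3 : nat) (w : nat -> nat) (U0 : triple) (m0 : R).
Hypothesis Hw : forall k, (1 <= w k <= 3)%nat.
Hypothesis Hr : forall k, w k <> w (S k).
Hypothesis Hm0 : 0 < m0.
Hypothesis HU0 : forall p, (1 <= p <= 3)%nat -> m0 <= tcomp p U0.
Let U := euclid_chain w U0.
Let Mk := markov_chain l1 l2 l3 w.
Let K := Kc l1 l2 l3.

Lemma K_pos : 3 <= K.
Proof. unfold K, Kc. pose proof (pos_INR l1). pose proof (pos_INR l2). pose proof (pos_INR l3). lra. Qed.

Lemma Lam_pos : 1 <= Lam l1 l2 l3.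
Proof. unfold Lam. pose proof (pos_INR l1). pose proof (pos_INR l2). pose proof (pos_INR l3). lra. Qed.

Lemma sandwich k' mk : 1 <= mk -> (forall p, (1 <= p <= 3)%nat -> mk <= tcomp p (Mk (S k'))) ->
  forall m p, (1 <= p <= 3)%nat ->
  0 <= tcomp p (euclid_chain (fun q => w (S k' + q)%nat) (wmap K (Mk (S k'))) m)
         - tcomp p (wmap K (Mk (S k' + m)%nat))
    <= (Lam l1 l2 l3 / mk / m0) * tcomp p (U (S k' + m)%nat) - Lam l1 l2 l3 / mk.
Proof.
  intros Hmk1 Hmk. pose proof K_pos. pose proof Lam_pos.
  assert (Heta : 0 <= Lam l1 l2 l3 / mk) by (apply Rmult_le_pos; [lra | left; apply Rinv_0_lt_compat; lra]).
  induction m; intros p Hp.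
  - rewrite Nat.add_0_r. simpl euclid_chain. split; [lra|].
    pose proof (U_pos w U0 m0 Hw Hm0 HU0 (S k') p Hp). fold U in H1.
    assert (Lam l1 l2 l3 / mk / m0 * tcomp p (U (S k')) - Lam l1 l2 l3 / mk
            = Lam l1 l2 l3 / mk * (tcomp p (U (S k')) - m0) / m0) by (field; lra).
    assert (0 <= Lam l1 l2 l3 / mk * (tcomp p (U (S k')) - m0) / m0).
    { apply Rmult_le_pos; [apply Rmult_le_pos; lra | left; apply Rinv_0_lt_compat; lra]. }
    lra.
  - rewrite Nat.add_succ_r. simpl euclid_chain.
    change (U (S (S k' + m))) with (euclid (w (S k' + m)%nat) (U (S k' + m)%nat)).
    change (Mk (S (S k' + m))) with (gmu l1 l2 l3 (w (S k' + m)%nat) (Mk (S k' + m)%nat)).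
    apply SW_step with (W := wmap K (Mk (S k' + m)%nat)); auto.
    + intros q Hq Hqj. rewrite !wmap_comp. rewrite gmu_other; auto.
    + change (S k' + m)%nat with (S (k' + m)).
      destruct (mstepn l1 l2 l3 w Hw Hr (k' + m)) as [_ [_ [Hup Hlow]]].
      fold Mk in Hup, Hlow. fold K in Hup, Hlow.
      change (gmu l1 l2 l3 (w (S (k' + m))) (Mk (S (k' + m)))) with (Mk (S (S (k' + m)))).
      set (j := w (S (k' + m))) in *.
      set (t := Mk (S (k' + m))) in *.
      set (y := tcomp j (Mk (S (S (k' + m))))) in *.
      assert (Ht : forall p, (1 <= p <= 3)%nat -> mk <= tcomp p t).
      { intros q Hq. apply Rle_trans with (tcomp q (Mk (S k'))); auto.
        apply mmono_le; auto. lia. }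
      specialize (Hlow mk Hmk1 Ht).
      assert (Htp : forall p, (1 <= p <= 3)%nat -> 0 < tcomp p t).
      { intros q Hq. pose proof (Ht q Hq). lra. }
      assert (Hy1 : 1 <= y) by (unfold y, j; apply mge1; auto).
      assert (Ho : 0 < oprod j t).
      { apply oprod_pos; auto. }
      rewrite wmap_osum by (first [unfold j; apply Hw | lra | exact Htp]). rewrite wmap_comp. fold y.
      split.
      * assert (E : K * oprod j t <= y * (1 + Lam l1 l2 l3 / mk)).
        { assert (K * oprod j t - y <= Lam l1 l2 l3 * y / mk).
          { apply Rmult_le_reg_l with mk; [lra|]. 
            replace (mk * (Lam l1 l2 l3 * y / mk)) with (Lam l1 l2 l3 * y) by (field; lra). exact Hlow. }
          replace (y * (1 + Lam l1 l2 l3 / mk)) with (y + Lam l1 l2 l3 * y / mk) by (field; lra). lra. }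
        assert (ln (K * (K * oprod j t)) <= ln (K * y) + ln (1 + Lam l1 l2 l3 / mk)).
        { rewrite <- ln_mult by (repeat apply Rmult_lt_0_compat; lra).
          apply ln_le. repeat apply Rmult_lt_0_compat; lra.
          replace (K * y * (1 + Lam l1 l2 l3 / mk)) with (K * (y * (1 + Lam l1 l2 l3 / mk))) by ring.
          apply Rmult_le_compat_l; lra. }
        pose proof (ln1p_le (Lam l1 l2 l3 / mk) Heta). lra.
      * apply ln_le. repeat apply Rmult_lt_0_compat; lra.
        apply Rmult_le_compat_l; lra.
Qed.

End Sandwich.

Lemma lim_to_eps (u : nat -> R) (l : R) : is_lim_seq u l ->
  forall eps, 0 < eps -> exists N, forall n, (N <= n)%nat -> Rabs (u n - l) < eps.
Proof.
  intros H eps Heps. apply is_lim_seq_spec in H. exact (H (mkposreal eps Heps)).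
Qed.

Lemma eps_to_lim (u : nat -> R) (l : R) :
  (forall eps, 0 < eps -> exists N, forall n, (N <= n)%nat -> Rabs (u n - l) < eps) ->
  is_lim_seq u l.
Proof.
  intros H. apply is_lim_seq_spec. intros eps. destruct (H eps (cond_pos eps)) as [N HN].
  exists N. exact HN.
Qed.

Lemma approx_lim (f : nat -> nat -> R) :
  (forall eps, 0 < eps -> exists Q N, forall n, (N <= n)%nat -> forall p, (1 <= p <= 3)%nat ->
     Rabs (f p n - Q) <= eps) ->
  exists q : R, forall p, (1 <= p <= 3)%nat -> is_lim_seq (f p) q.
Proof.
  intros H.
  assert (Hc : ex_lim_seq_cauchy (f 1%nat)).
  { intros eps. destruct (H (eps/3) ltac:(pose proof (cond_pos eps); lra)) as [Q [N HN]].
    exists N. intros n m Hn Hm.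
    pose proof (HN n Hn 1%nat ltac:(lia)). pose proof (HN m Hm 1%nat ltac:(lia)).
    pose proof (cond_pos eps).
    replace (f 1%nat n - f 1%nat m) with ((f 1%nat n - Q) - (f 1%nat m - Q)) by ring.
    eapply Rle_lt_trans. apply Rabs_triang. rewrite Rabs_Ropp. lra. }
  apply ex_lim_seq_cauchy_corr in Hc. destruct Hc as [q Hq].
  exists q. intros p Hp. apply eps_to_lim. intros eps Heps.
  destruct (H (eps/4) ltac:(lra)) as [Q [N HN]].
  destruct (lim_to_eps _ _ Hq (eps/4) ltac:(lra)) as [N' HN'].
  exists (N + N')%nat. intros n Hn.
  pose proof (HN n ltac:(lia) p Hp). pose proof (HN n ltac:(lia) 1%nat ltac:(lia)).
  pose proof (HN' n ltac:(lia)).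
  replace (f p n - q) with ((f p n - Q) - (f 1%nat n - Q) + (f 1%nat n - q)) by ring.
  eapply Rle_lt_trans. apply Rabs_triang.
  eapply Rle_lt_trans. apply Rplus_le_compat_r. apply Rabs_triang. rewrite Rabs_Ropp. lra.
Qed.

Lemma combine (X W L u Q e1 e2 e3 : R) : 0 < u -> Rabs (X/u - Q) <= e1 ->
  0 <= X - W <= e2 * u -> 0 <= L <= e3 * u -> Rabs ((W - L)/u - Q) <= e1 + e2 + e3.
Proof.
  intros Hu H1 H2 H3.
  assert (D1 : 0 <= (X - W)/u <= e2).
  { split. apply Rmult_le_pos; [lra | left; apply Rinv_0_lt_compat; lra].
    apply Rmult_le_reg_r with u; [lra|]. unfold Rdiv. rewrite Rmult_assoc, Rinv_l by lra. lra. }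
  assert (D2 : 0 <= L/u <= e3).
  { split. apply Rmult_le_pos; [lra | left; apply Rinv_0_lt_compat; lra].
    apply Rmult_le_reg_r with u; [lra|]. unfold Rdiv. rewrite Rmult_assoc, Rinv_l by lra. lra. }
  assert (E : (W - L)/u - Q = (X/u - Q) - (X - W)/u - L/u) by (field; lra).
  rewrite E. pose proof (Rle_abs (X/u - Q)). pose proof (Rle_abs (-(X/u - Q))).
  rewrite Rabs_Ropp in H0. apply Rabs_le. lra.
Qed.

Lemma case1 (l1 l2 l3 : nat) (a b c : R) (w : nat -> nat) :
  0 < a -> 0 < b -> 0 < c ->
  (forall k, (1 <= w k <= 3)%nat) -> (forall k, w k <> w (S k)) ->
  (forall i, (1 <= i <= 3)%nat -> appears_infinitely w i) ->
  exists q : R, forall j, (1 <= j <= 3)%nat ->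
    is_lim_seq (fun n => ln (tcomp j (markov_chain l1 l2 l3 w n))
                         / tcomp j (euclid_chain w (a, b, c) n)) q.
Proof.
  intros Ha Hb Hc Hw Hr Happ.
  set (m0 := Rmin a (Rmin b c)).
  assert (Hm0 : 0 < m0) by (unfold m0; repeat apply Rmin_glb_lt; auto).
  assert (HU0 : forall p, (1 <= p <= 3)%nat -> m0 <= tcomp p (a, b, c)).
  { intros p Hp. unfold m0. idx_cases p; simpl; unfold Rmin; repeat destruct Rle_dec; lra. }
  set (U := euclid_chain w (a, b, c)). set (Mk := markov_chain l1 l2 l3 w).
  set (K := Kc l1 l2 l3). set (Lm := Lam l1 l2 l3).
  assert (HK : 3 <= K) by apply (K_pos l1 l2 l3).
  assert (HL : 1 <= Lm) by apply (Lam_pos l1 l2 l3).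
  apply (approx_lim (fun j n => ln (tcomp j (Mk n)) / tcomp j (U n))).
  intros eps Heps.
  set (M := Rmax 1 (3 * Lm / (eps * m0))).
  assert (HM1 : 1 <= M) by apply Rmax_l.
  destruct (markov_unbounded l1 l2 l3 w Hw Hr Happ M) as [N1 HN1].
  set (k' := N1).
  assert (Hmk : forall p, (1 <= p <= 3)%nat -> M <= tcomp p (Mk (S k'))).
  { intros p Hp. apply HN1; auto. }
  set (ws := fun q => w (S k' + q)%nat).
  assert (Hws : forall k, (1 <= ws k <= 3)%nat) by (intros; apply Hw).
  assert (Hwr : forall k, ws k <> ws (S k)).
  { intros k. unfold ws. rewrite Nat.add_succ_r. apply Hr. }
  assert (HUk : forall p, (1 <= p <= 3)%nat -> m0 <= tcomp p (U (S k'))).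
  { intros p Hp. apply (U_pos w (a,b,c) m0 Hw Hm0 HU0). auto. }
  destruct (ratio_lemma ws (wmap K (Mk (S k'))) (U (S k')) m0 Hws Hwr Hm0 HUk) as [qk Hqk].
  assert (HUsh : forall m, euclid_chain ws (U (S k')) m = U (S k' + m)%nat).
  { intros m. unfold U. rewrite chain_shift. reflexivity. }
  destruct (lim_to_eps _ _ (Hqk 1%nat ltac:(lia)) (eps/3) ltac:(lra)) as [Na HNa].
  destruct (lim_to_eps _ _ (Hqk 2%nat ltac:(lia)) (eps/3) ltac:(lra)) as [Nb HNb].
  destruct (lim_to_eps _ _ (Hqk 3%nat ltac:(lia)) (eps/3) ltac:(lra)) as [Nc HNc].
  assert (HlnK : 0 <= ln K).
  { rewrite <- ln_1. apply ln_le; lra. }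
  destruct (U_unbounded w (a,b,c) m0 Hw Hr Hm0 HU0 Happ (3 * ln K / eps + 1)) as [N3 HN3].
  exists qk, (S k' + Na + Nb + Nc + N3)%nat.
  intros n Hn p Hp.
  set (m := (n - S k')%nat).
  assert (Hnm : n = (S k' + m)%nat) by (unfold m; lia).
  assert (Hrat : Rabs (tcomp p (euclid_chain ws (wmap K (Mk (S k'))) m) / tcomp p (U n) - qk) <= eps/3).
  { rewrite Hnm, <- HUsh. left. idx_cases p; [apply HNa | apply HNb | apply HNc]; unfold m; lia. }
  pose proof (sandwich l1 l2 l3 w (a,b,c) m0 Hw Hr Hm0 HU0 k' M HM1 Hmk m p Hp) as Hsw.
  fold U Mk K in Hsw. rewrite <- Hnm in Hsw. fold ws in Hsw. fold Lm in Hsw.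
  rewrite wmap_comp in Hsw.
  assert (Hun : 3 * ln K / eps + 1 <= tcomp p (U n)) by (apply HN3; auto; lia).
  assert (Hupos : 0 < tcomp p (U n)).
  { assert (0 <= 3 * ln K / eps) by (apply Rmult_le_pos; [lra | left; apply Rinv_0_lt_compat; lra]). lra. }
  assert (Hxpos : 0 < tcomp p (Mk n)) by (pose proof (mge1 l1 l2 l3 w Hw Hr n p Hp); fold Mk in H; lra).
  replace (ln (tcomp p (Mk n))) with (ln (K * tcomp p (Mk n)) - ln K)
    by (rewrite ln_mult by lra; ring).
  replace eps with (eps/3 + eps/3 + eps/3) by field.
  apply combine with (X := tcomp p (euclid_chain ws (wmap K (Mk (S k'))) m)); auto.
  - split; [apply Hsw|].
    assert (Hle : Lm / M / m0 <= eps / 3).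
    { assert (HM2 : 3 * Lm / (eps * m0) <= M) by apply Rmax_r.
      apply Rmult_le_compat_r with (r := eps * m0) in HM2; [|apply Rmult_le_pos; lra].
      replace (3 * Lm / (eps * m0) * (eps * m0)) with (3 * Lm) in HM2 by (field; lra).
      replace (Lm / M / m0) with (Lm / (M * m0)) by (field; lra).
      apply Rmult_le_reg_r with (M * m0); [apply Rmult_lt_0_compat; lra|].
      replace (Lm / (M * m0) * (M * m0)) with Lm by (field; lra). lra. }
    assert (0 <= Lm / M) by (apply Rmult_le_pos; [lra | left; apply Rinv_0_lt_compat; lra]).
    apply Rle_trans with (Lm / M / m0 * tcomp p (U n)); [apply Rle_trans with (Lm / M / m0 * tcomp p (U n) - Lm / M); [apply Hsw | lra]|].
    apply Rmult_le_compat_r; lra.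
  - split; auto.
    assert (E3 : 3 * ln K / eps * (eps / 3) = ln K) by (field; lra).
    assert (eps / 3 * (3 * ln K / eps) <= eps / 3 * tcomp p (U n)) by (apply Rmult_le_compat_l; lra).
    lra.
Qed.

Lemma lim_C_over_INR (C : R) : is_lim_seq (fun n => C / INR n) 0.
Proof.
  apply is_lim_seq_incr_n with (N := 1%nat).
  eapply is_lim_seq_ext; [|apply (lim_C_over_n C)].
  intros n. simpl. rewrite plus_INR. simpl. reflexivity.
Qed.

Lemma delta_lemma (P lam : nat -> R) (c0 Lm : R) :
  (forall m, 1 <= P m) -> (forall m, 2 * P m <= P (S m)) -> 0 <= c0 ->
  (forall m, 0 <= lam m <= Lm) ->
  (forall m, P (S (S m)) * P m = P (S m)^2 + lam m * P (S m) * c0 + c0^2) ->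
  exists delta : R, is_lim_seq (fun n => ln (P n) / INR n) delta.
Proof.
  intros HP1 HP2 Hc0 Hlam Hrec.
  assert (HLm : 0 <= Lm) by (pose proof (Hlam 0%nat); lra).
  set (C := Lm * c0 + c0^2).
  assert (HC : 0 <= C) by (unfold C; nra).
  set (d := fun k => ln (P (S k)) - ln (P k)).
  assert (Hpow : forall k, 2 ^ k <= P k).
  { induction k. simpl. apply HP1. simpl. specialize (HP2 k). lra. }
  assert (Hdiff : forall k, d k <= d (S k) <= d k + C / 2 ^ (S k)).
  { intros k. unfold d.
    set (Q := P (S k)).
    assert (HQ : 1 <= Q) by apply HP1.
    set (x := (lam k * Q * c0 + c0^2) / (Q * Q)).
    assert (Hx0 : 0 <= x).
    { unfold x. pose proof (Hlam k). apply Rmult_le_pos; [|left; apply Rinv_0_lt_compat; nra]. 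
      assert (0 <= lam k * Q * c0) by (apply Rmult_le_pos; [apply Rmult_le_pos|]; lra). nra. }
    assert (Hprod : P (S (S k)) * P k = (Q * Q) * (1 + x)).
    { rewrite Hrec. unfold x. fold Q. field. lra. }
    assert (Hln : ln (P (S (S k))) + ln (P k) = ln Q + ln Q + ln (1 + x)).
    { rewrite <- ln_mult by (pose proof (HP1 (S (S k))); pose proof (HP1 k); lra).
      rewrite Hprod. rewrite ln_mult by nra. rewrite ln_mult by lra. reflexivity. }
    assert (Hl0 : 0 <= ln (1 + x)) by (rewrite <- ln_1; apply ln_le; lra).
    assert (Hl1 : ln (1 + x) <= x) by (apply ln1p_le; lra).
    assert (HxC : x <= C / Q).
    { unfold x, C. apply Rmult_le_reg_r with (Q * Q); [nra|].
      replace ((lam k * Q * c0 + c0 ^ 2) / (Q * Q) * (Q * Q)) with (lam k * Q * c0 + c0^2) by (field; lra).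
      replace ((Lm * c0 + c0 ^ 2) / Q * (Q * Q)) with ((Lm * c0 + c0^2) * Q) by (field; lra).
      pose proof (Hlam k). 
      assert (lam k * Q * c0 <= Lm * Q * c0) by (apply Rmult_le_compat_r; [lra|]; apply Rmult_le_compat_r; lra).
      assert (c0^2 <= c0^2 * Q) by (assert (0 <= c0^2) by nra; nra). nra. }
    assert (HCQ : C / Q <= C / 2 ^ (S k)).
    { unfold Rdiv. apply Rmult_le_compat_l; [lra|]. apply Rinv_le_contravar.
      apply pow_lt; lra. apply Hpow. }
    split; lra. }
  assert (Hinc : forall k, d k <= d (S k)) by (intros k; apply Hdiff).
  assert (Hbd : forall k, d k <= d 0%nat + C - C / 2 ^ k).
  { induction k. simpl. lra.
    pose proof (Hdiff k). 
    assert (E : C / 2 ^ k = 2 * (C / 2 ^ (S k))) by (simpl; field; apply pow_nonzero; lra).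
    lra. }
  assert (Hbd' : forall k, d k <= d 0%nat + C).
  { intros k. pose proof (Hbd k). assert (0 <= C / 2 ^ k).
    { apply Rmult_le_pos; [lra | left; apply Rinv_0_lt_compat; apply pow_lt; lra]. } lra. }
  destruct (ex_finite_lim_seq_incr d (d 0%nat + C) Hinc Hbd') as [delta Hdelta].
  exists delta.
  apply is_lim_seq_Reals in Hdelta. apply Cesaro_1 in Hdelta. apply is_lim_seq_Reals in Hdelta.
  assert (Htel : forall k, sum_f_R0 d k = ln (P (S k)) - ln (P 0%nat)).
  { induction k. simpl. unfold d. ring. simpl. rewrite IHk. unfold d. ring. }
  replace delta with (delta + 0) by ring.
  apply is_lim_seq_ext_loc with (u := fun n => sum_f_R0 d (Init.Nat.pred n) / INR n + ln (P 0%nat) / INR n).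
  - exists 1%nat. intros n Hn. destruct n. lia. simpl Init.Nat.pred. rewrite Htel. field.
    apply not_0_INR. lia.
  - apply is_lim_seq_plus'. exact Hdelta. apply lim_C_over_INR.
Qed.

Definition lamj (l1 l2 l3 : nat) (j : nat) : R :=
  INR (match j with 1%nat => l1 | 2%nat => l2 | _ => l3 end).

Lemma gmu_prod l1 l2 l3 j a c t : (1 <= j <= 3)%nat -> (1 <= a <= 3)%nat -> (1 <= c <= 3)%nat ->
  j <> a -> j <> c -> a <> c -> tcomp j t <> 0 ->
  tcomp j (gmu l1 l2 l3 j t) * tcomp j t =
    tcomp a t ^ 2 + lamj l1 l2 l3 j * tcomp a t * tcomp c t + tcomp c t ^ 2.
Proof.
  intros Hj Ha Hc Hja Hjc Hac Ht. destruct t as [[x1 x2] x3]. unfold lamj.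
  idx_cases j; idx_cases a; idx_cases c; simpl in *; field; auto.
Qed.

Lemma tsum_other j a c t : (1 <= j <= 3)%nat -> (1 <= a <= 3)%nat -> (1 <= c <= 3)%nat ->
  j <> a -> j <> c -> a <> c -> tsum t - tcomp j t = tcomp a t + tcomp c t.
Proof.
  intros Hj Ha Hc Hja Hjc Hac. destruct t as [[x1 x2] x3]. unfold tsum.
  idx_cases j; idx_cases a; idx_cases c; simpl in *; ring.
Qed.

Lemma two_shift (g v : nat -> R) (L : R) : is_lim_seq g L ->
  (exists N0, forall n, (N0 <= n)%nat -> v n = g (n - 1)%nat \/ v n = g (n - 2)%nat) ->
  is_lim_seq v L.
Proof.
  intros Hg [N0 HN0]. apply eps_to_lim. intros eps Heps.
  destruct (lim_to_eps g L Hg eps Heps) as [N HN].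
  exists (N0 + N + 2)%nat. intros n Hn.
  destruct (HN0 n ltac:(lia)) as [E|E]; rewrite E; apply HN; lia.
Qed.

Lemma case2 (l1 l2 l3 : nat) (a b c : R) (w : nat -> nat) :
  0 < a -> 0 < b -> 0 < c ->
  (forall k, (1 <= w k <= 3)%nat) -> (forall k, w k <> w (S k)) ->
  forall i, (1 <= i <= 3)%nat -> ~ appears_infinitely w i ->
  exists q : R, forall j, (1 <= j <= 3)%nat -> j <> i ->
    is_lim_seq (fun n => ln (tcomp j (markov_chain l1 l2 l3 w n))
                         / tcomp j (euclid_chain w (a, b, c) n)) q.
Proof.
  intros Ha Hb Hc Hw Hr i Hi Hna.
  assert (HN : exists N, forall k, (N <= k)%nat -> w k <> i).
  { unfold appears_infinitely in Hna. apply not_all_ex_not in Hna. destruct Hna as [N HN].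
    exists N. intros k Hk E. apply HN. exists k. auto. }
  destruct HN as [N HN].
  set (m0 := Rmin a (Rmin b c)).
  assert (Hm0 : 0 < m0) by (unfold m0; repeat apply Rmin_glb_lt; auto).
  assert (HU0 : forall p, (1 <= p <= 3)%nat -> m0 <= tcomp p (a, b, c)).
  { intros p Hp. unfold m0. idx_cases p; simpl; unfold Rmin; repeat destruct Rle_dec; lra. }
  set (U := euclid_chain w (a, b, c)). set (Mk := markov_chain l1 l2 l3 w).
  assert (HF1 : forall m, (N <= m)%nat -> w (S (S m)) = w m).
  { intros m Hm. pose proof (Hw m). pose proof (Hw (S m)). pose proof (Hw (S (S m))).
    pose proof (Hr m). pose proof (Hr (S m)). pose proof (HN m ltac:(lia)).
    pose proof (HN (S m) ltac:(lia)). pose proof (HN (S (S m)) ltac:(lia)). lia. }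
  assert (Hfix : forall n, (N <= n)%nat -> tcomp i (Mk n) = tcomp i (Mk N)).
  { intros n Hn. induction Hn. reflexivity.
    change (Mk (S m)) with (gmu l1 l2 l3 (w m) (Mk m)). rewrite gmu_other; auto.
    apply not_eq_sym, HN. auto. }
  assert (HfixU : forall n, (N <= n)%nat -> tcomp i (U n) = tcomp i (U N)).
  { intros n Hn. induction Hn. reflexivity.
    change (U (S m)) with (euclid (w m) (U m)). rewrite euclid_comp; auto.
    replace (Nat.eqb i (w m)) with false; auto. symmetry. apply Nat.eqb_neq.
    apply not_eq_sym, HN. auto. }
  set (c0 := tcomp i (Mk N)). set (z0 := tcomp i (U N)).
  assert (Hc0 : 1 <= c0) by (apply mge1; auto).
  assert (Hz0 : m0 <= z0) by (apply (U_pos w (a,b,c) m0 Hw Hm0 HU0); auto).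
  set (P := fun m => tcomp (w m) (Mk (S m))).
  set (PU := fun m => tcomp (w m) (U (S m))).
  assert (HPrec : forall m, (N <= m)%nat ->
     P (S (S m)) * P m = P (S m)^2 + lamj l1 l2 l3 (w m) * P (S m) * c0 + c0^2).
  { intros m Hm. unfold P.
    rewrite (HF1 m Hm).
    change (Mk (S (S (S m)))) with (gmu l1 l2 l3 (w (S (S m))) (Mk (S (S m)))).
    rewrite (HF1 m Hm).
    assert (E1 : tcomp (w m) (Mk (S m)) = tcomp (w m) (Mk (S (S m)))).
    { change (Mk (S (S m))) with (gmu l1 l2 l3 (w (S m)) (Mk (S m))). rewrite gmu_other; auto. }
    assert (E2 : c0 = tcomp i (Mk (S (S m)))) by (symmetry; apply Hfix; lia).
    rewrite E1, E2.
    assert (E3 : tcomp (w (S m)) (Mk (S (S m))) = tcomp (w (S m)) (Mk (S (S m)))) by reflexivity.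
    pose proof (mge1 l1 l2 l3 w Hw Hr (S (S m)) (w m) (Hw m)) as Hpos. fold Mk in Hpos.
    apply gmu_prod; auto;
    first [ apply not_eq_sym; apply HN; lia | apply HN; lia | lra ]. }
  destruct (delta_lemma (fun k => P (N + k)%nat) (fun k => lamj l1 l2 l3 (w (N + k)%nat)) c0 (Lam l1 l2 l3))
    as [delta Hdelta].
  - intros m. unfold P. apply mge1; auto.
  - intros m. unfold P. rewrite Nat.add_succ_r.
    destruct (mstepn l1 l2 l3 w Hw Hr (N + m)) as [H _]. exact H.
  - lra.
  - intros m. unfold lamj, Lam. pose proof (pos_INR l1). pose proof (pos_INR l2). pose proof (pos_INR l3).
    destruct (w (N + m)%nat) as [|[|[|]]]; split; lra.
  - intros m. rewrite !Nat.add_succ_r. apply HPrec. lia.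
  - assert (HPU : forall n, PU (N + n)%nat = PU N + INR n * z0).
    { induction n.
      - rewrite Nat.add_0_r. simpl. ring.
      - rewrite Nat.add_succ_r. unfold PU at 1.
        change (U (S (S (N + n)))) with (euclid (w (S (N + n))) (U (S (N + n)))).
        rewrite euclid_comp by auto. rewrite Nat.eqb_refl.
        rewrite (tsum_other (w (S (N + n))) (w (N + n)%nat) i) by
          (auto; first [ apply not_eq_sym; apply Hr | apply HN; lia | apply not_eq_sym; apply HN; lia ]).
        change (tcomp (w (N + n)%nat) (U (S (N + n)))) with (PU (N + n)%nat).
        rewrite IHn. rewrite (HfixU (S (N + n))) by lia. fold z0. rewrite S_INR. ring. }
    assert (Hz0p : 0 < z0) by lra.
    assert (HPUpos : forall m, 0 < PU m).
    { intros m. unfold PU. pose proof (U_pos w (a,b,c) m0 Hw Hm0 HU0 (S m) (w m) (Hw m)). fold U in H. lra. }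
    assert (HPUlim : is_lim_seq (fun n => PU (N + n)%nat / INR n) z0).
    { replace z0 with (0 + z0) at 1 by ring.
      apply is_lim_seq_ext_loc with (u := fun n => PU N / INR n + z0).
      - exists 1%nat. intros n Hn. rewrite HPU. field. apply not_0_INR. lia.
      - apply is_lim_seq_plus'. apply lim_C_over_INR. apply is_lim_seq_const. }
    assert (Hg : is_lim_seq (fun n => ln (P (N + n)%nat) / PU (N + n)%nat) (delta / z0)).
    { apply is_lim_seq_ext_loc with (u := fun n => (ln (P (N + n)%nat) / INR n) / (PU (N + n)%nat / INR n)).
      - exists 1%nat. intros n Hn. pose proof (HPUpos (N + n)%nat). field. split. lra. apply not_0_INR. lia.
      - apply is_lim_seq_div'; auto. lra. }
    assert (Hg' : is_lim_seq (fun m => ln (P m) / PU m) (delta / z0)).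
    { apply is_lim_seq_incr_n with (N := N).
      eapply is_lim_seq_ext; [|exact Hg]. intros n. simpl. rewrite Nat.add_comm. reflexivity. }
    exists (delta / z0). intros j Hj Hji.
    apply two_shift with (g := fun m => ln (P m) / PU m); auto.
    exists (N + 2)%nat. intros n Hn. destruct n as [|m]; [lia|].
    replace (S m - 1)%nat with m by lia.
    destruct (Nat.eq_dec (w m) j) as [E|E].
    + left. unfold P, PU. rewrite E. reflexivity.
    + right. destruct m as [|m']; [lia|]. replace (S (S m') - 2)%nat with m' by lia.
      assert (Ej : w m' = j).
      { pose proof (Hw m'). pose proof (Hw (S m')). pose proof (Hr m').
        pose proof (HN m' ltac:(lia)). pose proof (HN (S m') ltac:(lia)). lia. }
      unfold P, PU. rewrite Ej.
      change (Mk (S (S m'))) with (gmu l1 l2 l3 (w (S m')) (Mk (S m'))).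
      change (U (S (S m'))) with (euclid (w (S m')) (U (S m'))).
      rewrite gmu_other by auto. rewrite euclid_comp by auto.
      replace (Nat.eqb j (w (S m'))) with false; [reflexivity|].
      symmetry. apply Nat.eqb_neq. auto.
Qed.

Theorem theorem6p10 (l1 l2 l3 : nat) (a b c : R) (w : nat -> nat) :
  zero_initial a b c -> reduced_seq w ->
  ((forall i, (1 <= i <= 3)%nat -> appears_infinitely w i) ->
     exists q : R, forall j, (1 <= j <= 3)%nat ->
       Un_cv (fun n => ln (tcomp j (markov_chain l1 l2 l3 w n))
                       / tcomp j (euclid_chain w (a, b, c) n)) q)
  /\
  (forall i, (1 <= i <= 3)%nat -> ~ appears_infinitely w i ->
     exists q : R, forall j, (1 <= j <= 3)%nat -> j <> i ->
       Un_cv (fun n => ln (tcomp j (markov_chain l1 l2 l3 w n))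
                       / tcomp j (euclid_chain w (a, b, c) n)) q).
Proof.
  intros [Ha [Hb [Hc _]]] [Hw Hr]. split.
  - intros Happ. destruct (case1 l1 l2 l3 a b c w Ha Hb Hc Hw Hr Happ) as [q Hq].
    exists q. intros j Hj. apply is_lim_seq_Reals. apply Hq; auto.
  - intros i Hi Hna. destruct (case2 l1 l2 l3 a b c w Ha Hb Hc Hw Hr i Hi Hna) as [q Hq].
    exists q. intros j Hj Hji. apply is_lim_seq_Reals. apply Hq; auto.
Qed.
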